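(* Let $p$ and $q$ be relatively prime positive integers, and let $\omega=e^{i\pi p/q}$ with $\omega\ne1$. Then $$\gamma(\omega)+\frac{\log(1-\omega)}{\omega}=\sum_{j=1}^{q}\omega^{j-1}E_{j,p,q}=\sum_{j=1}^{2q}\omega^{j-1}\log\frac{\Gamma\!\left(\frac{j+1}{2q}\right)}{\Gamma\!\left(\frac{j}{2q}\right)},$$ where $$E_{j,p,q}=\begin{cases}\log\dfrac{\Gamma\left(\frac{j+1}{q}\right)}{\Gamma\left(\frac jq\right)} & \text{if } p \text{ is even},\\[2ex] \log\dfrac{\Gamma\left(\frac{j+1}{2q}\right)\Gamma\left(\frac{j+q}{2q}\right)}{\Gamma\left(\frac{j}{2q}\right)\Gamma\left(\frac{j+q+1}{2q}\right)} & \text{if } p \text{ is odd}.\end{cases}$$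
   Context: $\gamma(z)=\sum_{n=1}^{\infty} z^{n-1}\left(\frac{1}{n}-\log\frac{n+1}{n}\right)$ for $|z|\le1$. $\log$ is the principal branch ($-\pi<\mathrm{Arg}\le\pi$), and $\Gamma$ is Euler's gamma function. *)

(* Defs.v *)
From Stdlib Require Import Reals.
From Coquelicot Require Import Coquelicot.
Open Scope R_scope.

Definition Gamma (x : R) : R :=
  RInt_gen (fun t => Rpower t (x - 1) * exp (- t)) (at_right 0) (Rbar_locally p_infty).

Definition Arg (z : C) : R :=
  let x := fst z in let y := snd z in
  if Rlt_dec 0 x then atan (y / x)
  else if Rlt_dec x 0 then
         (if Rle_dec 0 y then atan (y / x) + PI else atan (y / x) - PI)
  else if Rlt_dec 0 y then PI / 2
  else if Rlt_dec y 0 then - (PI / 2)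
  else 0.

Definition Clog (z : C) : C := (ln (Cmod z), Arg z).

Definition Cexp (z : C) : C := (exp (fst z) * cos (snd z), exp (fst z) * sin (snd z)).

(* n-th term (0-indexed, n = m - 1) of gamma(z) = sum_{m>=1} z^(m-1) (1/m - log((m+1)/m)). *)
Definition gamma_term (z : C) (n : nat) : C :=
  Cmult (pow_n z n) (RtoC (1 / INR (S n) - ln (INR (S (S n)) / INR (S n)))).

Definition E_jpq (j p q : nat) : R :=
  if Nat.even p then
    ln (Gamma (INR (j + 1) / INR q) / Gamma (INR j / INR q))
  else
    ln (Gamma (INR (j + 1) / INR (2 * q)) * Gamma (INR (j + q) / INR (2 * q))
        / (Gamma (INR j / INR (2 * q)) * Gamma (INR (j + q + 1) / INR (2 * q)))).

(* Main.v *)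
Require Import Defs.
From Stdlib Require Import Reals Lra Lia Classical.
From Coquelicot Require Import Coquelicot.
Open Scope R_scope.

Definition fG (x t : R) : R := Rpower t (x - 1) * exp (- t).

Lemma fG_eq x t : fG x t = exp ((x - 1) * ln t - t).
Proof. unfold fG, Rpower. rewrite <- exp_plus. f_equal. Qed.

Lemma fG_pos x t : 0 < fG x t.
Proof. rewrite fG_eq. apply exp_pos. Qed.

Lemma fG_cont x t : 0 < t -> continuous (fG x) t.
Proof.
  intros Ht.
  apply continuous_ext with (f := fun t => exp ((x - 1) * ln t - t)).
  { intros; symmetry; apply fG_eq. }
  apply (ex_derive_continuous (K := R_AbsRing) (V := R_NormedModule)). auto_derive. exact Ht.
Qed.

Lemma fG_ex x a b : 0 < a -> a <= b -> ex_RInt (fG x) a b.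
Proof.
  intros Ha Hab. apply (ex_RInt_continuous (V := R_CompleteNormedModule)). intros z Hz.
  apply fG_cont. rewrite Rmin_left in Hz by lra. lra.
Qed.

Definition IG x a b := RInt (fG x) a b.

Lemma IG_nonneg x a b : 0 < a -> a <= b -> 0 <= IG x a b.
Proof.
  intros Ha Hab. apply RInt_ge_0; auto. apply fG_ex; auto.
  intros; left; apply fG_pos.
Qed.

Lemma IG_chasles x a b c : 0 < a -> a <= b -> b <= c ->
  IG x a c = IG x a b + IG x b c.
Proof.
  intros. unfold IG. symmetry. apply (RInt_Chasles (V:=R_CompleteNormedModule)).
  apply fG_ex; lra. apply fG_ex; lra.
Qed.

Lemma IG_mono x a b a' b' : 0 < a' -> a' <= a -> a <= b -> b <= b' ->
  IG x a b <= IG x a' b'.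
Proof.
  intros. rewrite (IG_chasles x a' a b') by lra.
  rewrite (IG_chasles x a b b') by lra.
  pose proof (IG_nonneg x a' a). pose proof (IG_nonneg x b b'). lra.
Qed.

Definition GE x (y : R) := exists a b, 0 < a /\ a <= b /\ y = IG x a b.

Definition Bnd x K := forall a b, 0 < a -> a <= b -> IG x a b <= K.

Lemma IG_is x a b : 0 < a -> a <= b -> is_RInt (fG x) a b (IG x a b).
Proof. intros. apply (RInt_correct (V := R_CompleteNormedModule)). apply fG_ex; auto. Qed.

Lemma Gamma_lub_gen x K : Bnd x K -> is_lub (GE x) (Gamma x).
Proof.
  intros HB.
  assert (Hbd : bound (GE x)).
  { exists K. intros y (a & b & Ha & Hab & ->). apply HB; auto. }
  assert (Hne : exists y, GE x y).
  { exists (IG x 1 1). exists 1, 1. repeat split; lra. }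
  destruct (completeness (GE x) Hbd Hne) as [S HS].
  replace (Gamma x) with S; auto.
  symmetry. unfold Gamma.
  apply (is_RInt_gen_unique (Fa := at_right 0) (Fb := Rbar_locally p_infty)).
  unfold is_RInt_gen, filterlimi, filter_le, filtermapi.
  intros P [eps HP].
  assert (Hex : exists a0 b0, 0 < a0 /\ a0 <= b0 /\ S - eps < IG x a0 b0).
  { apply NNPP. intros Hn. destruct HS as [HS1 HS2].
    assert (S <= S - eps). { apply HS2. intros y (a & b & Ha & Hab & ->).
      apply Rnot_lt_le. intros Hl. apply Hn. exists a, b. auto. }
    destruct eps; simpl in *; lra. }
  destruct Hex as (a0 & b0 & Ha0 & Hab0 & Hlt).
  apply (Filter_prod _ _ _ (fun a => 0 < a < a0) (fun b => b0 < b)).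
  - exists (mkposreal a0 Ha0). intros y Hy Hy0. split; auto.
    unfold ball in Hy; simpl in Hy; unfold AbsRing_ball, abs, minus, plus, opp in Hy; simpl in Hy.
    apply Rabs_lt_between in Hy. lra.
  - exists b0. auto.
  - intros a b [Ha1 Ha2] Hb. simpl. exists (IG x a b). split.
    + apply IG_is; lra.
    + apply HP. unfold ball; simpl; unfold AbsRing_ball, abs, minus, plus, opp; simpl.
      destruct HS as [HS1 HS2].
      assert (IG x a b <= S). { apply HS1. exists a, b. repeat split; lra. }
      assert (IG x a0 b0 <= IG x a b). { apply IG_mono; lra. }
      apply Rabs_lt_between. lra.
Qed.

Lemma exp_mono_le u v : u <= v -> exp u <= exp v.
Proof. intros [H|H]; [left; apply exp_increasing; auto | subst; lra]. Qed.

Lemma exp_le_1 u : u <= 0 -> exp u <= 1.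
Proof. intros H. rewrite <- exp_0. apply exp_mono_le. auto. Qed.

Lemma RInt_deriv_R (f df : R -> R) a b : a <= b ->
  (forall t, a <= t <= b -> is_derive f t (df t)) ->
  (forall t, a <= t <= b -> continuous df t) ->
  RInt df a b = f b - f a.
Proof.
  intros Hab Hd Hc.
  apply (is_RInt_unique (V := R_CompleteNormedModule)).
  apply (is_RInt_derive (V := R_CompleteNormedModule)).
  - intros t Ht. rewrite Rmin_left, Rmax_right in Ht by lra. auto.
  - intros t Ht. rewrite Rmin_left, Rmax_right in Ht by lra. auto.
Qed.

Lemma exp_pred_ln y t : 0 < t -> exp ((y - 1) * ln t) = exp (y * ln t) / t.
Proof.
  intros Ht. replace ((y - 1) * ln t) with (y * ln t + - ln t) by ring.
  rewrite exp_plus, exp_Ropp, exp_ln by auto. unfold Rdiv. auto.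
Qed.

Lemma cont_of_derive (f : R -> R) t : ex_derive f t -> continuous f t.
Proof. apply (ex_derive_continuous (K := R_AbsRing) (V := R_NormedModule)). Qed.

Lemma Bnd_01 x : 0 < x <= 1 -> Bnd x (1 / x + 1).
Proof.
  intros Hx a b Ha Hab.
  set (a' := Rmin a 1). set (b' := Rmax b 1).
  assert (Ha' : 0 < a') by (unfold a'; apply Rmin_glb_lt; lra).
  assert (Ha'1 : a' <= 1) by apply Rmin_r.
  assert (Haa : a' <= a) by apply Rmin_l.
  assert (Hb'1 : 1 <= b') by apply Rmax_r.
  assert (Hbb : b <= b') by apply Rmax_l.
  apply Rle_trans with (IG x a' b'). { apply IG_mono; lra. }
  rewrite (IG_chasles x a' 1 b') by lra.
  assert (H1 : IG x a' 1 <= 1 / x).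
  { apply Rle_trans with (RInt (fun t => exp ((x - 1) * ln t)) a' 1).
    - apply RInt_le; auto. apply fG_ex; lra.
      apply (ex_RInt_continuous (V := R_CompleteNormedModule)).
      intros z Hz. rewrite Rmin_left in Hz by lra.
      apply cont_of_derive. auto_derive. lra.
      intros t Ht. rewrite fG_eq. apply exp_mono_le.
      assert (exp (-t) <= 1) by (rewrite <- exp_0; apply exp_mono_le; lra). lra.
    - rewrite (RInt_deriv_R (fun t => exp (x * ln t) / x)); try lra.
      + rewrite ln_1, Rmult_0_r, exp_0.
        assert (0 < exp (x * ln a') / x) by (apply Rdiv_lt_0_compat; [apply exp_pos|lra]).
        lra.
      + intros t Ht. auto_derive. lra. rewrite exp_pred_ln by lra. field. split; lra.
      + intros t Ht. apply cont_of_derive. auto_derive. lra. }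
  assert (H2 : IG x 1 b' <= 1).
  { apply Rle_trans with (RInt (fun t => exp (- t)) 1 b').
    - apply RInt_le; auto. apply fG_ex; lra.
      apply (ex_RInt_continuous (V := R_CompleteNormedModule)).
      intros z Hz. apply cont_of_derive. auto_derive. auto.
      intros t Ht. rewrite fG_eq. apply exp_mono_le.
      assert (0 <= ln t) by (rewrite <- ln_1; apply ln_le; lra).
      assert ((x - 1) * ln t <= 0). { apply Rmult_le_0_r; lra. } lra.
    - rewrite (RInt_deriv_R (fun t => - exp (- t))); try lra.
      + assert (0 < exp (- b')) by apply exp_pos.
        assert (exp (Ropp 1) <= 1) by (apply exp_le_1; lra). lra.
      + intros t Ht. auto_derive. auto. ring.
      + intros t Ht. apply cont_of_derive. auto_derive. auto. }
  lra.
Qed.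

Definition hG x t := - exp (x * ln t - t).

Lemma IG_rec x a b : 0 < x -> 0 < a -> a <= b ->
  IG (x + 1) a b = hG x b - hG x a + x * IG x a b.
Proof.
  intros Hx Ha Hab.
  assert (E : RInt (fun t => fG (x + 1) t - x * fG x t) a b = hG x b - hG x a).
  { apply RInt_deriv_R; auto.
    - intros t Ht. unfold hG. auto_derive. lra.
      rewrite !fG_eq. replace ((x + 1 - 1) * ln t - t) with (x * ln t - t) by ring.
      replace ((x - 1) * ln t - t) with ((x * ln t - t) + - ln t) by ring.
      replace (x * ln t + - t) with (x * ln t - t) by ring.
      rewrite (exp_plus (x * ln t - t) (- ln t)), exp_Ropp, exp_ln by lra. field. lra.
    - intros t Ht.
      apply continuous_ext with (f := fun t => exp ((x + 1 - 1) * ln t - t) - x * exp ((x - 1) * ln t - t)).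
      { intros; rewrite !fG_eq; reflexivity. }
      apply cont_of_derive. auto_derive. lra. }
  assert (E2 : RInt (fun t => fG (x + 1) t - x * fG x t) a b = IG (x + 1) a b - x * IG x a b).
  { apply (is_RInt_unique (V := R_CompleteNormedModule)).
    apply (is_RInt_ext (V := R_CompleteNormedModule)) with
      (f := fun t => minus (fG (x + 1) t) (scal x (fG x t))).
    { intros t _. unfold minus, plus, opp, scal; simpl. unfold mult; simpl. ring. }
    replace (IG (x + 1) a b - x * IG x a b) with (minus (IG (x + 1) a b) (scal x (IG x a b))).
    2:{ unfold minus, plus, opp, scal; simpl. unfold mult; simpl. ring. }
    apply (is_RInt_minus (V := R_CompleteNormedModule)). apply IG_is; auto.
    apply (is_RInt_scal (V := R_CompleteNormedModule)). apply IG_is; auto. }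
  lra.
Qed.

Lemma hG_nonpos x t : hG x t <= 0.
Proof. unfold hG. pose proof (exp_pos (x * ln t - t)). lra. Qed.

Lemma Bnd_step x K : 0 < x -> Bnd x K -> Bnd (x + 1) (1 + x * K).
Proof.
  intros Hx HB a b Ha Hab.
  set (a' := Rmin a 1).
  assert (Ha' : 0 < a') by (unfold a'; apply Rmin_glb_lt; lra).
  assert (Ha'1 : a' <= 1) by apply Rmin_r.
  assert (Haa : a' <= a) by apply Rmin_l.
  apply Rle_trans with (IG (x + 1) a' b). { apply IG_mono; lra. }
  rewrite IG_rec by lra.
  pose proof (hG_nonpos x b).
  assert (- hG x a' <= 1).
  { unfold hG. rewrite Ropp_involutive. apply exp_le_1.
    assert (ln a' <= 0) by (rewrite <- ln_1; apply ln_le; lra).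
    assert (x * ln a' <= 0) by (apply Rmult_le_0_l; lra). lra. }
  assert (x * IG x a' b <= x * K) by (apply Rmult_le_compat_l; [lra | apply HB; lra]).
  lra.
Qed.

Lemma Bnd_ex_n (n : nat) : forall x, 0 < x <= INR n + 1 -> exists K, Bnd x K.
Proof.
  induction n as [|n IH]; intros x Hx.
  - simpl in Hx. exists (1 / x + 1). apply Bnd_01. lra.
  - destruct (Rle_or_lt x 1) as [H1|H1].
    + exists (1 / x + 1). apply Bnd_01. lra.
    + destruct (IH (x - 1)) as [K HK]. rewrite S_INR in Hx. lra.
      exists (1 + (x - 1) * K). replace x with ((x - 1) + 1) at 1 by ring.
      apply Bnd_step; auto. lra.
Qed.

Lemma Bnd_ex x : 0 < x -> exists K, Bnd x K.
Proof.
  intros Hx. destruct (INR_unbounded x) as [n Hn].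
  apply (Bnd_ex_n n). lra.
Qed.

Lemma Gamma_lub x : 0 < x -> is_lub (GE x) (Gamma x).
Proof. intros Hx. destruct (Bnd_ex x Hx) as [K HK]. apply (Gamma_lub_gen x K HK). Qed.

Lemma Gamma_ub x a b : 0 < x -> 0 < a -> a <= b -> IG x a b <= Gamma x.
Proof. intros Hx Ha Hab. apply (proj1 (Gamma_lub x Hx)). exists a, b. auto. Qed.

Lemma Gamma_least x K : 0 < x -> (forall a b, 0 < a -> a <= b -> IG x a b <= K) ->
  Gamma x <= K.
Proof.
  intros Hx H. apply (proj2 (Gamma_lub x Hx)). intros y (a & b & Ha & Hab & ->). auto.
Qed.

Lemma Gamma_pos x : 0 < x -> 0 < Gamma x.
Proof.
  intros Hx. apply Rlt_le_trans with (IG x 1 2); [|apply Gamma_ub; lra].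
  unfold IG. apply RInt_gt_0. lra. intros; apply fG_pos.
  intros; apply fG_cont; lra.
Qed.

Lemma small_a x eps a : 0 < x -> 0 < eps -> 0 < a ->
  exists a', 0 < a' <= a /\ exp (x * ln a' - a') < eps.
Proof.
  intros Hx He Ha.
  set (a' := Rmin a (exp (ln eps / x))).
  assert (Ha' : 0 < a') by (unfold a'; apply Rmin_glb_lt; [lra | apply exp_pos]).
  exists a'. split. split; auto. apply Rmin_l.
  rewrite <- (exp_ln eps) by auto. apply exp_increasing.
  assert (ln a' <= ln eps / x).
  { rewrite <- (ln_exp (ln eps / x)). apply ln_le; auto. apply Rmin_r. }
  assert (x * ln a' <= ln eps).
  { apply Rmult_le_compat_l with (r := x) in H; [|lra].
    replace (x * (ln eps / x)) with (ln eps) in H by (field; lra). auto. }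
  lra.
Qed.

Lemma ln_lt_id y : 0 < y -> ln y < y.
Proof.
  intros Hy. pose proof (exp_ineq1_le (ln y)). rewrite exp_ln in H by auto. lra.
Qed.

Lemma large_b x eps b : 0 < x -> 0 < eps ->
  exists b', b <= b' /\ 0 < b' /\ exp (x * ln b' - b') < eps.
Proof.
  intros Hx He.
  set (b' := Rmax (Rmax b 1) (2 * (x * ln (2 * x) - ln eps) + 1)).
  assert (Hb1 : 1 <= b') by (unfold b'; eapply Rle_trans; [|apply Rmax_l]; apply Rmax_r).
  assert (Hb2 : 2 * (x * ln (2 * x) - ln eps) + 1 <= b') by apply Rmax_r.
  exists b'. split. unfold b'; eapply Rle_trans; [|apply Rmax_l]; apply Rmax_l.
  split. lra.
  rewrite <- (exp_ln eps) by auto. apply exp_increasing.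
  assert (Hl : ln b' < ln (2 * x) + b' / (2 * x)).
  { replace (ln b') with (ln (2 * x) + ln (b' / (2 * x))).
    2:{ rewrite <- ln_mult. f_equal. field. lra. lra. apply Rdiv_lt_0_compat; lra. }
    pose proof (ln_lt_id (b' / (2 * x))). assert (0 < b' / (2 * x)) by (apply Rdiv_lt_0_compat; lra).
    lra. }
  assert (x * ln b' < x * ln (2 * x) + b' / 2).
  { apply Rmult_lt_compat_l with (r := x) in Hl; auto.
    replace (x * (ln (2 * x) + b' / (2 * x))) with (x * ln (2 * x) + b' / 2) in Hl by (field; lra).
    auto. }
  lra.
Qed.

Lemma Gamma_rec x : 0 < x -> Gamma (x + 1) = x * Gamma x.
Proof.
  intros Hx. apply Rle_antisym.
  - apply Gamma_least. lra. intros a b Ha Hab.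
    apply Rle_plus_epsilon. intros eps He.
    destruct (small_a x eps a Hx He Ha) as (a' & [Ha' Ha'a] & Hs).
    apply Rle_trans with (IG (x + 1) a' b). apply IG_mono; lra.
    rewrite IG_rec by lra.
    pose proof (hG_nonpos x b).
    assert (x * IG x a' b <= x * Gamma x) by (apply Rmult_le_compat_l; [lra|apply Gamma_ub; lra]).
    unfold hG at 2. lra.
  - assert (Gamma x <= Gamma (x + 1) / x).
    { apply Gamma_least; auto. intros a b Ha Hab.
      apply Rle_plus_epsilon. intros eps He.
      assert (Hex : 0 < x * eps) by (apply Rmult_lt_0_compat; lra).
      destruct (large_b x (x * eps) b Hx Hex) as (b' & Hbb & Hb' & Hs).
      apply Rle_trans with (IG x a b'). apply IG_mono; lra.
      assert (x * IG x a b' <= Gamma (x + 1) + x * eps).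
      { assert (E := IG_rec x a b' Hx Ha ltac:(lra)).
        pose proof (hG_nonpos x a).
        pose proof (Gamma_ub (x + 1) a b' ltac:(lra) Ha ltac:(lra)).
        unfold hG in E at 1. lra. }
      apply Rmult_le_reg_l with x; auto.
      replace (x * (Gamma (x + 1) / x + eps)) with (Gamma (x + 1) + x * eps) by (field; lra).
      auto. }
    apply Rmult_le_compat_l with (r := x) in H; [|lra].
    replace (x * (Gamma (x + 1) / x)) with (Gamma (x + 1)) in H by (field; lra). auto.
Qed.

Lemma exp_convex l u v : 0 <= l <= 1 ->
  exp (l * u + (1 - l) * v) <= l * exp u + (1 - l) * exp v.
Proof.
  intros Hl. set (m := l * u + (1 - l) * v).
  assert (Eu : exp u = exp m * exp (u - m)) by (rewrite <- exp_plus; f_equal; ring).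
  assert (Ev : exp v = exp m * exp (v - m)) by (rewrite <- exp_plus; f_equal; ring).
  pose proof (exp_ineq1_le (u - m)). pose proof (exp_ineq1_le (v - m)).
  pose proof (exp_pos m).
  assert (exp m * (1 + (u - m)) <= exp u) by (rewrite Eu; apply Rmult_le_compat_l; lra).
  assert (exp m * (1 + (v - m)) <= exp v) by (rewrite Ev; apply Rmult_le_compat_l; lra).
  assert (l * (exp m * (1 + (u - m))) <= l * exp u) by (apply Rmult_le_compat_l; lra).
  assert ((1 - l) * (exp m * (1 + (v - m))) <= (1 - l) * exp v) by (apply Rmult_le_compat_l; lra).
  assert (l * (exp m * (1 + (u - m))) + (1 - l) * (exp m * (1 + (v - m))) = exp m).
  { unfold m. ring. }
  lra.
Qed.

Lemma IG_lin x y c1 c2 a b : 0 < a -> a <= b ->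
  RInt (fun t => c1 * fG x t + c2 * fG y t) a b = c1 * IG x a b + c2 * IG y a b.
Proof.
  intros Ha Hab.
  apply (is_RInt_unique (V := R_CompleteNormedModule)).
  apply (is_RInt_ext (V := R_CompleteNormedModule)) with
    (f := fun t => plus (scal c1 (fG x t)) (scal c2 (fG y t))).
  { intros t _. unfold plus, scal; simpl. unfold mult; simpl. ring. }
  replace (c1 * IG x a b + c2 * IG y a b) with (plus (scal c1 (IG x a b)) (scal c2 (IG y a b))).
  2:{ unfold plus, scal; simpl. unfold mult; simpl. ring. }
  apply (is_RInt_plus (V := R_CompleteNormedModule));
  apply (is_RInt_scal (V := R_CompleteNormedModule)); apply IG_is; auto.
Qed.

Lemma cont_lin x y c1 c2 t : 0 < t -> continuous (fun t => c1 * fG x t + c2 * fG y t) t.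
Proof.
  intros Ht.
  apply continuous_ext with (f := fun t => c1 * exp ((x - 1) * ln t - t) + c2 * exp ((y - 1) * ln t - t)).
  { intros; rewrite !fG_eq; reflexivity. }
  apply cont_of_derive. auto_derive. lra.
Qed.

Lemma Gamma_logconv x y l : 0 < x -> 0 < y -> 0 <= l <= 1 ->
  Gamma (l * x + (1 - l) * y) <= exp (l * ln (Gamma x) + (1 - l) * ln (Gamma y)).
Proof.
  intros Hx Hy Hl.
  set (z := l * x + (1 - l) * y).
  assert (Hz : 0 < z). { unfold z. destruct (Rle_lt_or_eq _ _ (proj1 Hl)) as [H|H].
    - assert (0 < l * x) by (apply Rmult_lt_0_compat; lra).
      assert (0 <= (1 - l) * y) by (apply Rmult_le_pos; lra). lra.
    - subst l. lra. }
  pose proof (Gamma_pos x Hx) as Gx. pose proof (Gamma_pos y Hy) as Gy.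
  set (C := exp (l * ln (Gamma x) + (1 - l) * ln (Gamma y))).
  assert (HC : 0 < C) by apply exp_pos.
  apply Gamma_least; auto. intros a b Ha Hab.
  apply Rle_trans with (RInt (fun t => (C * l / Gamma x) * fG x t + (C * (1 - l) / Gamma y) * fG y t) a b).
  - apply RInt_le; auto. apply fG_ex; auto.
    apply (ex_RInt_continuous (V := R_CompleteNormedModule)).
    intros t Ht. rewrite Rmin_left in Ht by lra.
    apply cont_lin; lra.
    intros t Ht.
    set (ux := (x - 1) * ln t - t - ln (Gamma x)).
    set (uy := (y - 1) * ln t - t - ln (Gamma y)).
    assert (E1 : fG z t = C * exp (l * ux + (1 - l) * uy)).
    { rewrite fG_eq. unfold C. rewrite <- exp_plus. f_equal. unfold ux, uy, z. ring. }
    assert (E2 : exp ux = fG x t / Gamma x).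
    { unfold ux. rewrite fG_eq.
      replace ((x - 1) * ln t - t - ln (Gamma x)) with (((x - 1) * ln t - t) + - ln (Gamma x)) by ring.
      rewrite exp_plus, exp_Ropp, exp_ln by auto. reflexivity. }
    assert (E3 : exp uy = fG y t / Gamma y).
    { unfold uy. rewrite fG_eq.
      replace ((y - 1) * ln t - t - ln (Gamma y)) with (((y - 1) * ln t - t) + - ln (Gamma y)) by ring.
      rewrite exp_plus, exp_Ropp, exp_ln by auto. reflexivity. }
    rewrite E1. pose proof (exp_convex l ux uy Hl).
    apply Rle_trans with (C * (l * exp ux + (1 - l) * exp uy)).
    apply Rmult_le_compat_l; lra.
    rewrite E2, E3. right. field. lra.
  - rewrite IG_lin by auto.
    pose proof (Gamma_ub x a b Hx Ha Hab). pose proof (Gamma_ub y a b Hy Ha Hab).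
    assert (C * l / Gamma x * IG x a b <= C * l).
    { apply Rmult_le_reg_r with (Gamma x); auto.
      replace (C * l / Gamma x * IG x a b * Gamma x) with (C * l * IG x a b) by (field; lra).
      apply Rmult_le_compat_l. apply Rmult_le_pos; lra. auto. }
    assert (C * (1 - l) / Gamma y * IG y a b <= C * (1 - l)).
    { apply Rmult_le_reg_r with (Gamma y); auto.
      replace (C * (1 - l) / Gamma y * IG y a b * Gamma y) with (C * (1 - l) * IG y a b) by (field; lra).
      apply Rmult_le_compat_l. apply Rmult_le_pos; lra. auto. }
    lra.
Qed.

Definition Lg x := ln (Gamma x).

Lemma Lg_rec x : 0 < x -> Lg (x + 1) = ln x + Lg x.
Proof. intros Hx. unfold Lg. rewrite Gamma_rec by auto. apply ln_mult; auto. apply Gamma_pos; auto. Qed.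

Lemma Lg_conv x y l : 0 < x -> 0 < y -> 0 <= l <= 1 ->
  Lg (l * x + (1 - l) * y) <= l * Lg x + (1 - l) * Lg y.
Proof.
  intros Hx Hy Hl. unfold Lg.
  rewrite <- (ln_exp (l * ln (Gamma x) + (1 - l) * ln (Gamma y))).
  apply ln_le. apply Gamma_pos.
  destruct (Rle_lt_or_eq _ _ (proj1 Hl)) as [H|H].
  - assert (0 < l * x) by (apply Rmult_lt_0_compat; lra).
    assert (0 <= (1 - l) * y) by (apply Rmult_le_pos; lra). lra.
  - subst l. lra.
  - apply Gamma_logconv; auto.
Qed.

Lemma gauss_bounds N x : 1 <= N -> 0 < x ->
  x * ln N <= Lg (N + 1 + x) - Lg (N + 1) <= x * ln (N + 1 + x).
Proof.
  intros HN Hx. split.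
  - pose proof (Lg_conv N (N + 1 + x) (x / (1 + x)) ltac:(lra) ltac:(lra)) as H.
    assert (0 <= x / (1 + x) <= 1).
    { split. apply Rdiv_le_0_compat; lra.
      apply Rmult_le_reg_r with (1 + x). lra. unfold Rdiv. rewrite Rmult_assoc, Rinv_l by lra. lra. }
    specialize (H H0).
    replace (x / (1 + x) * N + (1 - x / (1 + x)) * (N + 1 + x)) with (N + 1) in H by (field; lra).
    rewrite Lg_rec in H by lra.
    rewrite Lg_rec by lra.
    set (A := Lg N) in *. set (B := Lg (N + 1 + x)) in *.
    apply Rmult_le_compat_l with (r := 1 + x) in H; [|lra].
    replace ((1 + x) * (x / (1 + x) * A + (1 - x / (1 + x)) * B)) with (x * A + B) in H by (field; lra).
    nra.
  - pose proof (Lg_conv (N + 1) (N + 2 + x) (1 / (1 + x)) ltac:(lra) ltac:(lra)) as H.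
    assert (0 <= 1 / (1 + x) <= 1).
    { split. apply Rdiv_le_0_compat; lra.
      apply Rmult_le_reg_r with (1 + x). lra. unfold Rdiv. rewrite Rmult_assoc, Rinv_l by lra. lra. }
    specialize (H H0).
    replace (1 / (1 + x) * (N + 1) + (1 - 1 / (1 + x)) * (N + 2 + x)) with (N + 1 + x) in H by (field; lra).
    replace (N + 2 + x) with ((N + 1 + x) + 1) in H by ring.
    rewrite (Lg_rec (N + 1 + x)) in H by lra.
    set (A := Lg (N + 1)) in *. set (B := Lg (N + 1 + x)) in *.
    apply Rmult_le_compat_l with (r := 1 + x) in H; [|lra].
    replace ((1 + x) * (1 / (1 + x) * A + (1 - 1 / (1 + x)) * (ln (N + 1 + x) + B))) with (A + x * (ln (N + 1 + x) + B)) in H by (field; lra).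
    nra.
Qed.

Fixpoint fsum (f : nat -> R) (N : nat) : R :=
  match N with O => 0 | S N' => fsum f N' + f N' end.

Lemma fsum_ext f g N : (forall k, (k < N)%nat -> f k = g k) -> fsum f N = fsum g N.
Proof.
  induction N; simpl; intros H; auto.
  rewrite IHN by (intros; apply H; lia). rewrite H by lia. auto.
Qed.

Lemma fsum_plus f g N : fsum (fun k => f k + g k) N = fsum f N + fsum g N.
Proof. induction N; simpl; [ring | rewrite IHN; ring]. Qed.

Lemma fsum_minus f g N : fsum (fun k => f k - g k) N = fsum f N - fsum g N.
Proof. induction N; simpl; [ring | rewrite IHN; ring]. Qed.

Lemma fsum_scal a f N : fsum (fun k => a * f k) N = a * fsum f N.
Proof. induction N; simpl; [ring | rewrite IHN; ring]. Qed.

Lemma fsum_zero N : fsum (fun _ => 0) N = 0.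
Proof. induction N; simpl; [ring | rewrite IHN; ring]. Qed.

Lemma fsum_add f a b : fsum f (a + b) = fsum f a + fsum (fun k => f (a + k)%nat) b.
Proof.
  induction b; simpl.
  - rewrite Nat.add_0_r. ring.
  - rewrite Nat.add_succ_r. simpl. rewrite IHb. ring.
Qed.

Lemma fsum_abs_le f N B : (forall k, (k < N)%nat -> Rabs (f k) <= B) -> Rabs (fsum f N) <= INR N * B.
Proof.
  induction N; cbn [fsum]; intros H.
  - rewrite Rabs_R0. simpl. lra.
  - eapply Rle_trans. apply Rabs_triang.
    rewrite S_INR. specialize (IHN ltac:(intros; apply H; lia)).
    specialize (H N ltac:(lia)). lra.
Qed.

Lemma fsum_sum_n f N : sum_n f N = fsum f (S N).
Proof.
  induction N.
  - rewrite sum_O. simpl. symmetry. apply Rplus_0_l.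
  - rewrite sum_Sn, IHN. reflexivity.
Qed.

Lemma fsum_sum_n_m f N : sum_n_m f 1 N = fsum (fun k => f (S k)) N.
Proof.
  induction N.
  - rewrite sum_n_m_zero by lia. simpl. auto.
  - rewrite sum_n_Sm by lia. rewrite IHN. reflexivity.
Qed.

Definition PP n x := fsum (fun i => ln (x + INR i)) (S n).

Lemma Lg_shift n x : 0 < x -> Lg (x + INR n + 1) = Lg x + PP n x.
Proof.
  intros Hx. induction n.
  - unfold PP. cbn [fsum]. change (INR 0) with 0. rewrite !Rplus_0_r, Rplus_0_l, Lg_rec by auto. ring.
  - rewrite S_INR. replace (x + (INR n + 1) + 1) with ((x + INR n + 1) + 1) by ring.
    rewrite Lg_rec by (pose proof (pos_INR n); lra). rewrite IHn.
    unfold PP. cbn [fsum]. rewrite (S_INR n). replace (x + (INR n + 1)) with (x + INR n + 1) by ring. ring.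
Qed.

Lemma ln_1_plus_le u : 0 <= u -> ln (1 + u) <= u.
Proof.
  intros Hu. rewrite <- (ln_exp u) at 2. apply ln_le. lra. apply exp_ineq1_le.
Qed.

Lemma rho_bound n x : (1 <= n)%nat -> 0 < x <= 2 ->
  0 <= Lg x + PP n x - Lg (INR n + 1) - x * ln (INR n) <= 6 / INR n.
Proof.
  intros Hn Hx.
  assert (HN : 1 <= INR n) by (apply (le_INR 1); auto).
  pose proof (gauss_bounds (INR n) x HN ltac:(lra)) as [H1 H2].
  replace (INR n + 1 + x) with (x + INR n + 1) in H1, H2 by ring.
  rewrite Lg_shift in H1, H2 by lra.
  split. lra.
  assert (E : ln (x + INR n + 1) - ln (INR n) = ln (1 + (1 + x) / INR n)).
  { replace (1 + (1 + x) / INR n) with ((x + INR n + 1) * / INR n) by (field; lra).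
    rewrite ln_mult, ln_Rinv by (try apply Rinv_0_lt_compat; lra). ring. }
  assert (ln (1 + (1 + x) / INR n) <= (1 + x) / INR n).
  { apply ln_1_plus_le. apply Rdiv_le_0_compat; lra. }
  assert (x * (ln (x + INR n + 1) - ln (INR n)) <= x * ((1 + x) / INR n)).
  { rewrite E. apply Rmult_le_compat_l; lra. }
  assert (x * ((1 + x) / INR n) <= 6 / INR n).
  { unfold Rdiv. rewrite <- Rmult_assoc. apply Rmult_le_compat_r.
    left; apply Rinv_0_lt_compat; lra. nra. }
  lra.
Qed.

Lemma ln_ratio a b m : 0 < a -> 0 < b -> 0 < m -> ln (a / m) - ln (b / m) = ln (a / b).
Proof.
  intros Ha Hb Hm. unfold Rdiv.
  rewrite !ln_mult, !ln_Rinv by (try apply Rinv_0_lt_compat; auto). ring.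
Qed.

Section GaussSum.
Variable M : nat.
Variable c : nat -> R.
Hypothesis HM : (1 <= M)%nat.
Hypothesis hper : forall k, c (k + M)%nat = c k.
Hypothesis hsum : fsum c M = 0.
Hypothesis hb : forall k, Rabs (c k) <= 1.

Definition Dg j := Lg (INR (S (S j)) / INR M) - Lg (INR (S j) / INR M).
Definition Lt k := ln (INR (S (S k)) / INR (S k)).

Lemma per_mult i k : c (k + i * M)%nat = c k.
Proof.
  induction i. rewrite Nat.mul_0_l, Nat.add_0_r; auto.
  rewrite Nat.mul_succ_l, Nat.add_assoc, hper. auto.
Qed.

Lemma reindex g n :
  fsum (fun j => c j * fsum (fun i => g (j + i * M)%nat) n) M = fsum (fun k => c k * g k) (n * M).
Proof.
  induction n.
  - simpl. rewrite (fsum_ext _ (fun _ => 0)). apply fsum_zero. intros; simpl; ring.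
  - rewrite (fsum_ext _ (fun j => c j * fsum (fun i => g (j + i * M)%nat) n + c j * g (j + n * M)%nat)).
    2:{ intros; cbn [fsum]; ring. }
    rewrite fsum_plus, IHn, Nat.mul_succ_l, fsum_add. f_equal.
    apply fsum_ext. intros k _. rewrite (Nat.add_comm (n * M) k), per_mult. auto.
Qed.

Lemma gauss_sum n : (1 <= n)%nat ->
  Rabs (fsum (fun j => c j * Dg j) M + fsum (fun k => c k * Lt k) (S n * M)) <= INR M * (6 / INR n).
Proof.
  intros Hn.
  assert (HMr : 1 <= INR M) by (apply (le_INR 1); auto).
  assert (HNr : 1 <= INR n) by (apply (le_INR 1); auto).
  set (N := INR n).
  set (rho := fun x => Lg x + PP n x - Lg (N + 1) - x * ln N).
  set (e := fun j => rho (INR (S (S j)) / INR M) - rho (INR (S j) / INR M)).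
  set (Q := fun j => fsum (fun i => Lt (j + i * M)%nat) (S n)).
  assert (HD : forall j, (j < M)%nat -> c j * Dg j = c j * e j - c j * Q j + (ln N / INR M) * c j).
  { intros j Hj.
    assert (EQ : Q j = PP n (INR (S (S j)) / INR M) - PP n (INR (S j) / INR M)).
    { unfold Q, PP. rewrite <- fsum_minus. apply fsum_ext. intros i _.
      unfold Lt. rewrite <- ln_ratio with (m := INR M).
      2,3: apply lt_0_INR; lia. 2: lra.
      f_equal; f_equal; rewrite !S_INR, plus_INR, mult_INR, ?S_INR; field; lra. }
    rewrite EQ. unfold e, rho, Dg. rewrite !S_INR. field. lra. }
  rewrite (fsum_ext _ _ _ HD).
  rewrite fsum_plus, fsum_minus, fsum_scal, hsum.
  unfold Q. rewrite reindex.
  replace (fsum (fun j => c j * e j) M - fsum (fun k => c k * Lt k) (S n * M) + ln N / INR M * 0 +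
    fsum (fun k => c k * Lt k) (S n * M)) with (fsum (fun j => c j * e j) M) by ring.
  apply fsum_abs_le. intros j Hj.
  assert (Hx1 : 0 < INR (S j) / INR M <= 2).
  { split. apply Rdiv_lt_0_compat; [apply lt_0_INR; lia | lra].
    apply Rmult_le_reg_r with (INR M). lra. unfold Rdiv. rewrite Rmult_assoc, Rinv_l by lra.
    assert (INR (S j) <= INR M) by (apply le_INR; lia). lra. }
  assert (Hx2 : 0 < INR (S (S j)) / INR M <= 2).
  { split. apply Rdiv_lt_0_compat; [apply lt_0_INR; lia | lra].
    apply Rmult_le_reg_r with (INR M). lra. unfold Rdiv. rewrite Rmult_assoc, Rinv_l by lra.
    assert (INR (S (S j)) <= INR M + 1) by (rewrite <- S_INR; apply le_INR; lia). lra. }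
  pose proof (rho_bound n _ Hn Hx1). pose proof (rho_bound n _ Hn Hx2).
  rewrite Rabs_mult. specialize (hb j).
  assert (Rabs (e j) <= 6 / INR n).
  { unfold e, rho, N. apply Rabs_le. lra. }
  apply Rle_trans with (1 * (6 / INR n)).
  apply Rmult_le_compat; auto; try apply Rabs_pos. unfold N. lra.
Qed.

End GaussSum.

Lemma fsum_deriv (a : nat -> R) N t :
  is_derive (fun t => fsum (fun k => a k * t ^ (S k) / INR (S k)) N) t (fsum (fun k => a k * t ^ k) N).
Proof.
  induction N; cbn [fsum].
  - apply (is_derive_const (K := R_AbsRing) (V := R_NormedModule) 0).
  - apply (is_derive_plus (K := R_AbsRing) (V := R_NormedModule)
             (fun t => fsum (fun k => a k * t ^ (S k) / INR (S k)) N)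
             (fun t => a N * t ^ (S N) / INR (S N))); auto.
    pose proof (lt_0_INR (S N) ltac:(lia)).
    auto_derive. lra.
    change (match N with 0%nat => 1 | S _ => INR N + 1 end) with (INR (S N)). field. lra.
Qed.

Lemma MVT_nonneg (g dg : R -> R) :
  (forall t, 0 <= t <= 1 -> is_derive g t (dg t)) ->
  (forall t, 0 <= t <= 1 -> 0 <= dg t) -> g 0 <= g 1.
Proof.
  intros Hd Hp.
  destruct (MVT_gen g 0 1 dg) as (xi & Hxi & E).
  - intros x Hx. rewrite Rmin_left, Rmax_right in Hx by lra. apply Hd; lra.
  - intros x Hx. rewrite Rmin_left, Rmax_right in Hx by lra.
    apply continuity_pt_filterlim. apply cont_of_derive. eexists. apply Hd; lra.
  - rewrite Rmin_left, Rmax_right in Hxi by lra. specialize (Hp xi Hxi). lra.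
Qed.

Lemma MVT_bound (f df : R -> R) K N :
  (forall t, 0 <= t <= 1 -> is_derive f t (df t)) ->
  (forall t, 0 <= t <= 1 -> Rabs (df t) <= K * t ^ N) ->
  Rabs (f 1 - f 0) <= K / INR (S N).
Proof.
  intros Hd Hb.
  assert (HN : 0 < INR (S N)) by (apply lt_0_INR; lia).
  assert (Dp : forall t, is_derive (fun t => K * t ^ (S N) / INR (S N)) t (K * t ^ N)).
  { intros t. auto_derive.
    change (match N with 0%nat => 1 | S _ => INR N + 1 end) with (INR (S N)). lra.
    change (match N with 0%nat => 1 | S _ => INR N + 1 end) with (INR (S N)). field. lra. }
  pose proof (MVT_nonneg (fun t => f t + K * t ^ (S N) / INR (S N)) (fun t => df t + K * t ^ N)) as H1.
  pose proof (MVT_nonneg (fun t => K * t ^ (S N) / INR (S N) - f t) (fun t => K * t ^ N - df t)) as H2.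
  assert (E0 : 0 ^ S N = 0) by (simpl; ring).
  apply Rabs_le.
  assert (f 0 + K * 0 ^ S N / INR (S N) <= f 1 + K * 1 ^ S N / INR (S N)).
  { apply H1. intros t Ht.
    apply (is_derive_plus (K := R_AbsRing) (V := R_NormedModule) f (fun t => K * t ^ S N / INR (S N))); auto.
    intros t Ht. specialize (Hb t Ht). apply Rabs_le_between in Hb. lra. }
  assert (K * 0 ^ S N / INR (S N) - f 0 <= K * 1 ^ S N / INR (S N) - f 1).
  { apply H2. intros t Ht.
    apply (is_derive_minus (K := R_AbsRing) (V := R_NormedModule) (fun t => K * t ^ S N / INR (S N)) f); auto.
    intros t Ht. specialize (Hb t Ht). apply Rabs_le_between in Hb. lra. }
  rewrite pow1, E0 in *.
  unfold Rdiv in *. rewrite Rmult_0_r, Rmult_0_l in *. rewrite Rmult_1_r in *. lra.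
Qed.

Section LogPart.
Variable th : R.
Let co := cos th.
Let si := sin th.
Hypothesis Hco : co < 1.

Lemma Hcs : co * co + si * si = 1.
Proof. unfold co, si. pose proof (sin2_cos2 th). unfold Rsqr in H. lra. Qed.

Definition cc k := cos (INR k * th).
Definition ss k := sin (INR k * th).

Lemma cc_S k : cc (S k) = cc k * co - ss k * si.
Proof. unfold cc, ss, co, si. rewrite S_INR, Rmult_plus_distr_r, Rmult_1_l, cos_plus. ring. Qed.

Lemma ss_S k : ss (S k) = ss k * co + cc k * si.
Proof. unfold cc, ss, co, si. rewrite S_INR, Rmult_plus_distr_r, Rmult_1_l, sin_plus. ring. Qed.

Lemma geom N t :
  fsum (fun k => cc k * t ^ k) N * (1 - co * t) + fsum (fun k => ss k * t ^ k) N * (si * t) = 1 - t ^ N * cc N /\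
  fsum (fun k => ss k * t ^ k) N * (1 - co * t) - fsum (fun k => cc k * t ^ k) N * (si * t) = - t ^ N * ss N.
Proof.
  induction N as [|N [IH1 IH2]]; cbn [fsum].
  - unfold cc, ss. change (INR 0) with 0. rewrite !Rmult_0_l, cos_0, sin_0. simpl. split; ring.
  - set (X := fsum (fun k => cc k * t ^ k) N) in *.
    set (Y := fsum (fun k => ss k * t ^ k) N) in *.
    rewrite cc_S, ss_S. simpl pow. split.
    + replace ((X + cc N * t ^ N) * (1 - co * t) + (Y + ss N * t ^ N) * (si * t))
        with ((X * (1 - co * t) + Y * (si * t)) + cc N * t ^ N * (1 - co * t) + ss N * t ^ N * (si * t)) by ring.
      rewrite IH1. ring.
    + replace ((Y + ss N * t ^ N) * (1 - co * t) - (X + cc N * t ^ N) * (si * t))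
        with ((Y * (1 - co * t) - X * (si * t)) + ss N * t ^ N * (1 - co * t) - cc N * t ^ N * (si * t)) by ring.
      rewrite IH2. ring.
Qed.

Definition delta := Rmin 1 (1 - co).

Lemma delta_pos : 0 < delta.
Proof. unfold delta. apply Rmin_glb_lt; lra. Qed.

Lemma one_m_ct t : 0 <= t <= 1 -> delta <= 1 - co * t.
Proof.
  intros Ht. unfold delta. destruct (Rle_or_lt co 0).
  - apply Rle_trans with 1. apply Rmin_l. nra.
  - apply Rle_trans with (1 - co). apply Rmin_r. nra.
Qed.

Definition Dd t := (1 - co * t) ^ 2 + (si * t) ^ 2.

Lemma Dd_ge t : 0 <= t <= 1 -> delta ^ 2 <= Dd t.
Proof.
  intros Ht. pose proof (one_m_ct t Ht). pose proof delta_pos. unfold Dd.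
  assert (delta ^ 2 <= (1 - co * t) ^ 2) by (simpl; nra).
  assert (0 <= (si * t) ^ 2) by (simpl; nra). lra.
Qed.

Definition ReG t := - (co * (ln (Dd t) / 2) + si * atan (- si * t / (1 - co * t))).
Definition ImG t := - (co * atan (- si * t / (1 - co * t)) - si * (ln (Dd t) / 2)).

Lemma ReG_der t : 0 <= t <= 1 -> is_derive ReG t ((1 - co * t) / Dd t).
Proof.
  intros Ht. pose proof (one_m_ct t Ht). pose proof delta_pos.
  pose proof (Dd_ge t Ht). assert (0 < delta ^ 2) by (simpl; nra).
  pose proof Hcs.
  assert (HD : 0 < (1 - co * t) ^ 2 + (si * t) ^ 2) by (unfold Dd in *; lra).
  unfold ReG, Dd. auto_derive.
  - repeat split; auto. lra.
  - transitivity ((co*co + si*si - co*t*(co*co+si*si)) / ((1 - co * t) ^ 2 + (si * t) ^ 2)).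
    + field. split. lra. simpl in *. nra.
    + rewrite H3. field. lra.
Qed.

Lemma ImG_der t : 0 <= t <= 1 -> is_derive ImG t (si * t / Dd t).
Proof.
  intros Ht. pose proof (one_m_ct t Ht). pose proof delta_pos.
  pose proof (Dd_ge t Ht). assert (0 < delta ^ 2) by (simpl; nra).
  pose proof Hcs.
  assert (HD : 0 < (1 - co * t) ^ 2 + (si * t) ^ 2) by (unfold Dd in *; lra).
  unfold ImG, Dd. auto_derive.
  - repeat split; auto. lra.
  - transitivity (si * t * (co*co+si*si) / ((1 - co * t) ^ 2 + (si * t) ^ 2)).
    + field. split. lra. simpl in *. nra.
    + rewrite H3. field. lra.
Qed.


Lemma geom_solved N t : cc N = 1 -> ss N = 0 ->
  fsum (fun k => cc k * t ^ k) N * Dd t = (1 - t ^ N) * (1 - co * t) /\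
  fsum (fun k => ss k * t ^ k) N * Dd t = (1 - t ^ N) * (si * t).
Proof.
  intros H1 H2. destruct (geom N t) as [E1 E2]. rewrite H1 in E1. rewrite H2 in E2.
  set (X := fsum (fun k => cc k * t ^ k) N) in *.
  set (Y := fsum (fun k => ss k * t ^ k) N) in *.
  split.
  - replace (X * Dd t) with ((X * (1 - co * t) + Y * (si * t)) * (1 - co * t) - (Y * (1 - co * t) - X * (si * t)) * (si * t)) by (unfold Dd; ring).
    rewrite E1, E2. ring.
  - replace (Y * Dd t) with ((X * (1 - co * t) + Y * (si * t)) * (si * t) + (Y * (1 - co * t) - X * (si * t)) * (1 - co * t)) by (unfold Dd; ring).
    rewrite E1, E2. ring.
Qed.

Definition K0 := 2 / delta ^ 2.

Lemma ReG_0 : ReG 0 = 0.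
Proof.
  unfold ReG, Dd. replace (- si * 0 / (1 - co * 0)) with 0 by field.
  rewrite atan_0. replace ((1 - co * 0) ^ 2 + (si * 0) ^ 2) with 1 by ring. rewrite ln_1. field.
Qed.

Lemma ImG_0 : ImG 0 = 0.
Proof.
  unfold ImG, Dd. replace (- si * 0 / (1 - co * 0)) with 0 by field.
  rewrite atan_0. replace ((1 - co * 0) ^ 2 + (si * 0) ^ 2) with 1 by ring. rewrite ln_1. field.
Qed.

Lemma log_series_re N : cc N = 1 -> ss N = 0 ->
  Rabs (fsum (fun k => cc k / INR (S k)) N - ReG 1) <= K0 / INR (S N).
Proof.
  intros H1 H2.
  pose proof delta_pos as Hd. assert (Hd2 : 0 < delta ^ 2) by (simpl; nra).
  pose proof (MVT_bound (fun t => fsum (fun k => cc k * t ^ (S k) / INR (S k)) N - ReG t)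
     (fun t => fsum (fun k => cc k * t ^ k) N - (1 - co * t) / Dd t) K0 N) as HM.
  replace (fsum (fun k => cc k / INR (S k)) N - ReG 1) with
    ((fun t => fsum (fun k => cc k * t ^ (S k) / INR (S k)) N - ReG t) 1 -
     (fun t => fsum (fun k => cc k * t ^ (S k) / INR (S k)) N - ReG t) 0).
  2:{ cbv beta. rewrite ReG_0.
      rewrite (fsum_ext (fun k => cc k * 0 ^ S k / INR (S k)) (fun k => 0)) by (intros; rewrite pow_i by lia; unfold Rdiv; ring).
      rewrite (fsum_ext (fun k => cc k * 1 ^ S k / INR (S k)) (fun k => cc k / INR (S k))) by (intros; rewrite pow1; unfold Rdiv; ring).
      rewrite fsum_zero. ring. }
  apply HM.
  - intros t Ht. apply (is_derive_minus (K := R_AbsRing) (V := R_NormedModule)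
       (fun t => fsum (fun k => cc k * t ^ S k / INR (S k)) N) ReG).
    apply fsum_deriv. apply ReG_der; auto.
  - intros t Ht. pose proof (Dd_ge t Ht). pose proof (one_m_ct t Ht).
    pose proof (geom_solved N t H1 H2) as [E _].
    assert (HDt : 0 < Dd t) by lra.
    assert (Eq : fsum (fun k => cc k * t ^ k) N - (1 - co * t) / Dd t = - (t ^ N) * ((1 - co * t) / Dd t)).
    { apply Rmult_eq_reg_r with (Dd t). 2: lra.
      rewrite Rmult_minus_distr_r, E. field. lra. }
    rewrite Eq, Rabs_mult, Rabs_Ropp, Rabs_pos_eq by (apply pow_le; lra).
    rewrite Rmult_comm. apply Rmult_le_compat_r. apply pow_le; lra.
    unfold K0. rewrite Rabs_pos_eq by (apply Rdiv_le_0_compat; lra).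
    pose proof (COS_bound th). fold co in H3.
    unfold Rdiv. apply Rmult_le_compat. lra. left; apply Rinv_0_lt_compat; lra. nra.
    apply Rinv_le_contravar; lra.
Qed.

Lemma log_series_im N : cc N = 1 -> ss N = 0 ->
  Rabs (fsum (fun k => ss k / INR (S k)) N - ImG 1) <= K0 / INR (S N).
Proof.
  intros H1 H2.
  pose proof delta_pos as Hd. assert (Hd2 : 0 < delta ^ 2) by (simpl; nra).
  pose proof (MVT_bound (fun t => fsum (fun k => ss k * t ^ (S k) / INR (S k)) N - ImG t)
     (fun t => fsum (fun k => ss k * t ^ k) N - si * t / Dd t) K0 N) as HM.
  replace (fsum (fun k => ss k / INR (S k)) N - ImG 1) with
    ((fun t => fsum (fun k => ss k * t ^ (S k) / INR (S k)) N - ImG t) 1 -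
     (fun t => fsum (fun k => ss k * t ^ (S k) / INR (S k)) N - ImG t) 0).
  2:{ cbv beta. rewrite ImG_0.
      rewrite (fsum_ext (fun k => ss k * 0 ^ S k / INR (S k)) (fun k => 0)) by (intros; rewrite pow_i by lia; unfold Rdiv; ring).
      rewrite (fsum_ext (fun k => ss k * 1 ^ S k / INR (S k)) (fun k => ss k / INR (S k))) by (intros; rewrite pow1; unfold Rdiv; ring).
      rewrite fsum_zero. ring. }
  apply HM.
  - intros t Ht. apply (is_derive_minus (K := R_AbsRing) (V := R_NormedModule)
       (fun t => fsum (fun k => ss k * t ^ S k / INR (S k)) N) ImG).
    apply fsum_deriv. apply ImG_der; auto.
  - intros t Ht. pose proof (Dd_ge t Ht). pose proof (one_m_ct t Ht).
    pose proof (geom_solved N t H1 H2) as [_ E].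
    assert (HDt : 0 < Dd t) by lra.
    assert (Eq : fsum (fun k => ss k * t ^ k) N - si * t / Dd t = - (t ^ N) * (si * t / Dd t)).
    { apply Rmult_eq_reg_r with (Dd t). 2: lra.
      rewrite Rmult_minus_distr_r, E. field. lra. }
    rewrite Eq, Rabs_mult, Rabs_Ropp, (Rabs_pos_eq (t ^ N)) by (apply pow_le; lra).
    rewrite Rmult_comm. apply Rmult_le_compat_r. apply pow_le; lra.
    unfold K0. rewrite Rabs_div by lra. rewrite (Rabs_pos_eq (Dd t)) by lra.
    pose proof (SIN_bound th). fold si in H3.
    assert (Rabs (si * t) <= 2). { rewrite Rabs_mult. rewrite (Rabs_pos_eq t) by lra.
      assert (Rabs si <= 1) by (apply Rabs_le; lra). nra. }
    unfold Rdiv. apply Rmult_le_compat. apply Rabs_pos. left; apply Rinv_0_lt_compat; lra. auto.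
    apply Rinv_le_contravar; lra.
Qed.

End LogPart.

Lemma pow_n_w th k : pow_n (Cexp (0, th)) k = (cc th k, ss th k).
Proof.
  induction k.
  - unfold cc, ss. change (INR 0) with 0. rewrite Rmult_0_l, cos_0, sin_0. reflexivity.
  - simpl pow_n. rewrite IHk. rewrite cc_S, ss_S. unfold Cexp. simpl. rewrite exp_0.
    apply injective_projections; simpl; ring.
Qed.

Lemma fst_sum_n_m_C (a : nat -> C) N : fst (sum_n_m a 1 N) = fsum (fun k => fst (a (S k))) N.
Proof.
  induction N.
  - rewrite sum_n_m_zero by lia. reflexivity.
  - rewrite sum_n_Sm by lia. cbn [fsum]. rewrite <- IHN. reflexivity.
Qed.

Lemma snd_sum_n_m_C (a : nat -> C) N : snd (sum_n_m a 1 N) = fsum (fun k => snd (a (S k))) N.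
Proof.
  induction N.
  - rewrite sum_n_m_zero by lia. reflexivity.
  - rewrite sum_n_Sm by lia. cbn [fsum]. rewrite <- IHN. reflexivity.
Qed.

Lemma fst_sum_n_C (a : nat -> C) N : fst (sum_n a N) = fsum (fun k => fst (a k)) (S N).
Proof.
  induction N.
  - rewrite sum_O. cbn [fsum]. simpl. ring.
  - rewrite sum_Sn. cbn [fsum]. cbn [fsum] in IHN. rewrite <- IHN. reflexivity.
Qed.

Lemma snd_sum_n_C (a : nat -> C) N : snd (sum_n a N) = fsum (fun k => snd (a k)) (S N).
Proof.
  induction N.
  - rewrite sum_O. cbn [fsum]. simpl. ring.
  - rewrite sum_Sn. cbn [fsum]. cbn [fsum] in IHN. rewrite <- IHN. reflexivity.
Qed.

Lemma ln_sqrt' D : 0 < D -> ln (sqrt D) = ln D / 2.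
Proof.
  intros HD. pose proof (sqrt_lt_R0 D HD).
  rewrite <- (sqrt_sqrt D) at 2 by lra. rewrite ln_mult by auto. field.
Qed.

Lemma Clog_div_w th : cos th < 1 ->
  Cdiv (Clog (Cminus 1 (Cexp (0, th)))) (Cexp (0, th)) = (- ReG th 1, - ImG th 1).
Proof.
  intros Hc. pose proof (Hcs th) as H.
  unfold Cexp, Cdiv, Clog, Cminus, Cplus, Copp, Cmod, Cmult, Cinv, Arg, ReG, ImG, Dd. simpl.
  rewrite exp_0, !Rmult_1_l.
  destruct (Rlt_dec 0 (1 + - cos th)) as [Hp|Hp]; [|lra].
  assert (E1 : cos th * cos th + sin th * sin th = 1) by exact H.
  replace (cos th * (cos th * 1) + sin th * (sin th * 1)) with 1 by nra.
  set (Dv := (1 + - cos th) * ((1 + - cos th) * 1) + (0 + - sin th) * ((0 + - sin th) * 1)).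
  assert (HDv : 0 < Dv) by (unfold Dv; nra).
  replace ((1 - cos th * 1) * ((1 - cos th * 1) * 1) + sin th * 1 * (sin th * 1 * 1)) with Dv by (unfold Dv; ring).
  rewrite ln_sqrt' by auto.
  replace (- sin th * 1 / (1 - cos th * 1)) with ((0 + - sin th) / (1 + - cos th)) by (field; lra).
  f_equal; field.
Qed.

Lemma period_facts th M : cc th M = 1 -> ss th M = 0 ->
  (forall k, cc th (k + M) = cc th k) /\ (forall k, ss th (k + M) = ss th k).
Proof.
  intros H1 H2. unfold cc, ss in *. split; intros k;
  rewrite plus_INR, Rmult_plus_distr_r; [rewrite cos_plus | rewrite sin_plus];
  rewrite H1, H2; ring.
Qed.

Lemma antiperiod_facts th M : cc th M = -1 -> ss th M = 0 ->
  (forall k, cc th (k + M) = - cc th k) /\ (forall k, ss th (k + M) = - ss th k).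
Proof.
  intros H1 H2. unfold cc, ss in *. split; intros k;
  rewrite plus_INR, Rmult_plus_distr_r; [rewrite cos_plus | rewrite sin_plus];
  rewrite H1, H2; ring.
Qed.

Lemma sum_zero_facts th M : cos th < 1 -> cc th M = 1 -> ss th M = 0 ->
  fsum (cc th) M = 0 /\ fsum (ss th) M = 0.
Proof.
  intros Hc H1 H2.
  destruct (geom_solved th M 1 H1 H2) as [E1 E2].
  pose proof (Dd_ge th Hc 1 ltac:(lra)). pose proof (delta_pos th Hc).
  assert (0 < delta th ^ 2) by (simpl; nra).
  assert (HD : 0 < Dd th 1) by lra.
  rewrite pow1 in E1, E2.
  rewrite (fsum_ext _ (cc th)) in E1 by (intros; rewrite pow1; ring).
  rewrite (fsum_ext _ (ss th)) in E2 by (intros; rewrite pow1; ring).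
  split.
  - apply Rmult_eq_reg_r with (Dd th 1). rewrite E1. ring. lra.
  - apply Rmult_eq_reg_r with (Dd th 1). rewrite E2. ring. lra.
Qed.

Lemma cc_bound th k : Rabs (cc th k) <= 1.
Proof. unfold cc. apply Rabs_le. apply COS_bound. Qed.
Lemma ss_bound th k : Rabs (ss th k) <= 1.
Proof. unfold ss. apply Rabs_le. apply SIN_bound. Qed.

Lemma Lt_bound k : 0 <= Lt k <= 1 / INR (S k).
Proof.
  assert (H : 0 < INR (S k)) by (apply lt_0_INR; lia).
  unfold Lt. replace (INR (S (S k)) / INR (S k)) with (1 + 1 / INR (S k)).
  2:{ rewrite (S_INR (S k)). field. lra. }
  assert (0 < 1 / INR (S k)) by (apply Rdiv_lt_0_compat; lra).
  split. rewrite <- ln_1. apply ln_le; lra.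
  apply ln_1_plus_le. lra.
Qed.

Lemma term_bound (c : nat -> R) k : Rabs (c k) <= 1 ->
  Rabs (c k * (1 / INR (S k) - Lt k)) <= 1 / INR (S k).
Proof.
  intros Hc. pose proof (Lt_bound k). rewrite Rabs_mult.
  assert (Rabs (1 / INR (S k) - Lt k) <= 1 / INR (S k)) by (apply Rabs_le; lra).
  apply Rle_trans with (1 * (1 / INR (S k))). apply Rmult_le_compat; auto; apply Rabs_pos. lra.
Qed.

Lemma zero_of_bound x C : (forall n, (1 <= n)%nat -> Rabs x <= C / INR n) -> x = 0.
Proof.
  intros H. destruct (Req_dec x 0) as [E|E]; auto. exfalso.
  assert (Hx : 0 < Rabs x) by (apply Rabs_pos_lt; auto).
  destruct (INR_unbounded (Rmax 1 (C / Rabs x))) as [n Hn].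
  assert (Hn1 : 1 < INR n) by (pose proof (Rmax_l 1 (C / Rabs x)); lra).
  assert (Hn2 : C / Rabs x < INR n) by (pose proof (Rmax_r 1 (C / Rabs x)); lra).
  assert (1 <= n)%nat. { destruct n. simpl in Hn1. lra. lia. }
  specialize (H n H0).
  apply Rmult_le_compat_r with (r := INR n) in H; [|lra].
  replace (C / INR n * INR n) with C in H by (field; lra).
  apply Rmult_lt_compat_l with (r := Rabs x) in Hn2; auto.
  replace (Rabs x * (C / Rabs x)) with C in Hn2 by (field; lra). lra.
Qed.

Lemma comp_bound (M : nat) (c : nat -> R) (A G1 B : R) :
  (1 <= M)%nat ->
  (forall k, c (k + M)%nat = c k) -> fsum c M = 0 -> (forall k, Rabs (c k) <= 1) ->
  0 <= B ->
  (forall n, Rabs (fsum (fun k => c k / INR (S k)) (S n * M) - G1) <= B / INR (S (S n * M))) ->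
  A = fsum (fun j => c j * Dg M j) M ->
  forall eps, 0 < eps -> exists K1, forall K, (K1 <= K)%nat ->
    Rabs (fsum (fun k => c k * (1 / INR (S k) - Lt k)) (S K) - (A + G1)) < eps.
Proof.
  intros HM hper hsum hb HB HL HA eps He.
  set (Bc := 1 + B + 6 * INR M).
  assert (HMr : 1 <= INR M) by (apply (le_INR 1); auto).
  destruct (INR_unbounded (Rmax 1 (Bc / eps))) as [n1 Hn1].
  assert (Hn1a : 1 < INR n1) by (pose proof (Rmax_l 1 (Bc / eps)); lra).
  assert (Hn1b : Bc / eps < INR n1) by (pose proof (Rmax_r 1 (Bc / eps)); lra).
  assert (Hn1c : (1 <= n1)%nat). { destruct n1. simpl in Hn1a. lra. lia. }
  exists (S n1 * M)%nat. intros K HK.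
  set (N := S K).
  set (q0 := (N / M)%nat).
  assert (HNM : N = (M * q0 + N mod M)%nat) by (apply Nat.div_mod; lia).
  assert (Hmod : (N mod M < M)%nat) by (apply Nat.mod_upper_bound; lia).
  assert (Hq0 : (S n1 <= q0)%nat) by nia.
  destruct q0 as [|n] eqn:Eq0; [lia|].
  assert (Hn : (n1 <= n)%nat) by lia.
  set (N0 := (S n * M)%nat).
  assert (HN0 : (N0 <= N)%nat) by (unfold N0; nia).
  set (g := fun k => c k * (1 / INR (S k) - Lt k)).
  replace N with (N0 + (N - N0))%nat by lia.
  rewrite fsum_add.
  assert (Tail : Rabs (fsum (fun k => g (N0 + k)%nat) (N - N0)) <= 1 / INR n).
  { apply Rle_trans with (INR (N - N0) * (1 / INR (S N0))).
    - apply fsum_abs_le. intros k Hk. eapply Rle_trans. apply term_bound. apply hb.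
      apply Rmult_le_reg_r with (INR (S (N0 + k)) * INR (S N0)).
      apply Rmult_lt_0_compat; apply lt_0_INR; lia.
      unfold Rdiv. rewrite !Rmult_1_l.
      replace (/ INR (S (N0 + k)) * (INR (S (N0 + k)) * INR (S N0))) with (INR (S N0)).
      2:{ field. apply not_0_INR. lia. }
      replace (/ INR (S N0) * (INR (S (N0 + k)) * INR (S N0))) with (INR (S (N0 + k))).
      2:{ field. apply not_0_INR. lia. }
      apply le_INR. lia.
    - assert (HNr : 1 <= INR n) by (apply (le_INR 1); lia).
      assert (INR (N - N0) <= INR M) by (apply le_INR; unfold N0; nia).
      assert (INR n * INR M <= INR (S N0)).
      { rewrite <- mult_INR. apply le_INR. unfold N0. nia. }
      apply Rle_trans with (INR M * (1 / INR (S N0))).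
      apply Rmult_le_compat_r. left; apply Rdiv_lt_0_compat; [lra|apply lt_0_INR; lia]. auto.
      apply Rle_trans with (INR M * (1 / (INR n * INR M))).
      apply Rmult_le_compat_l. lra. unfold Rdiv. rewrite !Rmult_1_l.
      apply Rinv_le_contravar; [nra|auto].
      right. field. lra. }
  assert (Gs := gauss_sum M c HM hper hsum hb n ltac:(lia)).
  fold N0 in Gs.
  assert (Hlog := HL n). fold N0 in Hlog.
  assert (Split : fsum g N0 = fsum (fun k => c k / INR (S k)) N0 - fsum (fun k => c k * Lt k) N0).
  { rewrite <- fsum_minus. apply fsum_ext. intros k _. unfold g. unfold Rdiv. ring. }
  fold g. rewrite Split.
  assert (HNr : 1 <= INR n) by (apply (le_INR 1); lia).
  assert (Hlog' : B / INR (S N0) <= B / INR n).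
  { unfold Rdiv. apply Rmult_le_compat_l; auto. apply Rinv_le_contravar. lra.
    apply le_INR. unfold N0. nia. }
  assert (Fin : Rabs (fsum (fun k => c k / INR (S k)) N0 - fsum (fun k => c k * Lt k) N0 +
     fsum (fun k => g (N0 + k)%nat) (N - N0) - (A + G1)) <= Bc / INR n).
  { replace (fsum (fun k => c k / INR (S k)) N0 - fsum (fun k => c k * Lt k) N0 +
       fsum (fun k => g (N0 + k)%nat) (N - N0) - (A + G1)) with
      ((fsum (fun k => c k / INR (S k)) N0 - G1) - (fsum (fun j => c j * Dg M j) M + fsum (fun k => c k * Lt k) N0)
       + fsum (fun k => g (N0 + k)%nat) (N - N0)) by (rewrite HA; ring).
    eapply Rle_trans. apply Rabs_triang.
    eapply Rle_trans. apply Rplus_le_compat_r. apply Rabs_triang.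
    rewrite Rabs_Ropp.
    unfold Bc. unfold Rdiv in *. lra. }
  eapply Rle_lt_trans. apply Fin.
  assert (INR n1 <= INR n) by (apply le_INR; auto).
  apply Rmult_lt_reg_r with (INR n). lra.
  unfold Rdiv. rewrite Rmult_assoc, Rinv_l, Rmult_1_r by lra.
  apply Rmult_lt_compat_l with (r := eps) in Hn1b; auto.
  replace (eps * (Bc / eps)) with Bc in Hn1b by (field; lra). nra.
Qed.

Lemma is_series_C (a : nat -> C) (l : C) :
  (forall eps, 0 < eps -> exists K1, forall K, (K1 <= K)%nat -> Rabs (fst (sum_n a K) - fst l) < eps) ->
  (forall eps, 0 < eps -> exists K1, forall K, (K1 <= K)%nat -> Rabs (snd (sum_n a K) - snd l) < eps) ->
  is_series a l.
Proof.
  intros H1 H2. unfold is_series. intros P [eps HP].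
  destruct (H1 eps (cond_pos eps)) as [K1 HK1].
  destruct (H2 eps (cond_pos eps)) as [K2 HK2].
  exists (max K1 K2). intros K HK. apply HP. split.
  - unfold ball; simpl. unfold AbsRing_ball, abs, minus, plus, opp; simpl. apply HK1. lia.
  - unfold ball; simpl. unfold AbsRing_ball, abs, minus, plus, opp; simpl. apply HK2. lia.
Qed.

Lemma weighted_fst th (e : nat -> R) N :
  fst (sum_n_m (fun j => Cmult (pow_n (Cexp (0, th)) (j - 1)) (RtoC (e j))) 1 N) =
  fsum (fun j => cc th j * e (S j)) N.
Proof.
  rewrite fst_sum_n_m_C. apply fsum_ext. intros j _.
  replace (S j - 1)%nat with j by lia. rewrite pow_n_w. unfold Cmult, RtoC. simpl. ring.
Qed.

Lemma weighted_snd th (e : nat -> R) N :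
  snd (sum_n_m (fun j => Cmult (pow_n (Cexp (0, th)) (j - 1)) (RtoC (e j))) 1 N) =
  fsum (fun j => ss th j * e (S j)) N.
Proof.
  rewrite snd_sum_n_m_C. apply fsum_ext. intros j _.
  replace (S j - 1)%nat with j by lia. rewrite pow_n_w. unfold Cmult, RtoC. simpl. ring.
Qed.

Lemma ln_Gdiv a b : 0 < a -> 0 < b -> ln (Gamma a / Gamma b) = Lg a - Lg b.
Proof.
  intros Ha Hb. pose proof (Gamma_pos a Ha). pose proof (Gamma_pos b Hb).
  unfold Rdiv, Lg. rewrite ln_mult by (try apply Rinv_0_lt_compat; auto). rewrite ln_Rinv by auto. ring.
Qed.

Lemma ln_G4 a b c d : 0 < a -> 0 < b -> 0 < c -> 0 < d ->
  ln (Gamma a * Gamma b / (Gamma c * Gamma d)) = Lg a + Lg b - Lg c - Lg d.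
Proof.
  intros Ha Hb Hc Hd. pose proof (Gamma_pos a Ha). pose proof (Gamma_pos b Hb).
  pose proof (Gamma_pos c Hc). pose proof (Gamma_pos d Hd).
  unfold Rdiv, Lg.
  rewrite ln_mult by (try apply Rinv_0_lt_compat; apply Rmult_lt_0_compat; auto).
  rewrite ln_Rinv by (apply Rmult_lt_0_compat; auto).
  rewrite !ln_mult by auto. ring.
Qed.

Lemma pos_frac k m : (0 < m)%nat -> 0 < INR (S k) / INR m.
Proof. intros. apply Rdiv_lt_0_compat; apply lt_0_INR; lia. Qed.

Lemma fsum_double f q : fsum f (2 * q) = fsum f q + fsum (fun k => f (q + k)%nat) q.
Proof. replace (2 * q)%nat with (q + q)%nat by lia. apply fsum_add. Qed.

Lemma odd_case_eq (c : nat -> R) q :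
  (forall k, c (k + q)%nat = - c k) ->
  fsum (fun j => c j * (Dg (2 * q) j - Dg (2 * q) (j + q))) q = fsum (fun j => c j * Dg (2 * q) j) (2 * q).
Proof.
  intros Hc. rewrite fsum_double.
  rewrite (fsum_ext (fun k => c (q + k)%nat * Dg (2 * q) (q + k)) (fun k => - (c k * Dg (2 * q) (k + q)))).
  2:{ intros k _. rewrite (Nat.add_comm q k), Hc. ring. }
  rewrite (fsum_ext (fun k => - (c k * Dg (2 * q) (k + q))) (fun k => (-1) * (c k * Dg (2 * q) (k + q)))) by (intros; ring).
  rewrite fsum_scal.
  rewrite (fsum_ext (fun j => c j * (Dg (2 * q) j - Dg (2 * q) (j + q))) (fun j => c j * Dg (2 * q) j - c j * Dg (2 * q) (j + q))) by (intros; ring).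
  rewrite fsum_minus. ring.
Qed.

Lemma even_case_eq (c : nat -> R) q : (1 <= q)%nat ->
  (forall k, c (k + q)%nat = c k) -> fsum c q = 0 ->
  (forall k, c (k + 2 * q)%nat = c k) -> fsum c (2 * q) = 0 -> (forall k, Rabs (c k) <= 1) ->
  fsum (fun j => c j * Dg q j) q = fsum (fun j => c j * Dg (2 * q) j) (2 * q).
Proof.
  intros Hq h1 s1 h2 s2 hb.
  apply Rminus_diag_uniq. apply (zero_of_bound _ (18 * INR q)).
  intros n Hn.
  pose proof (gauss_sum q c Hq h1 s1 hb (2 * n + 1) ltac:(lia)) as G1.
  pose proof (gauss_sum (2 * q) c ltac:(lia) h2 s2 hb n Hn) as G2.
  replace (S (2 * n + 1) * q)%nat with (S n * (2 * q))%nat in G1 by lia.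
  set (T := fsum (fun k => c k * Lt k) (S n * (2 * q))) in *.
  set (A1 := fsum (fun j => c j * Dg q j) q) in *.
  set (A2 := fsum (fun j => c j * Dg (2 * q) j) (2 * q)) in *.
  assert (HNr : 1 <= INR n) by (apply (le_INR 1); lia).
  assert (Hqr : 1 <= INR q) by (apply (le_INR 1); lia).
  assert (E1 : INR (2 * n + 1) >= INR n) by (apply Rle_ge, le_INR; lia).
  assert (INR q * (6 / INR (2 * n + 1)) <= INR q * (6 / INR n)).
  { apply Rmult_le_compat_l. lra. unfold Rdiv. apply Rmult_le_compat_l. lra.
    apply Rinv_le_contravar; lra. }
  rewrite mult_INR in G2. change (INR 2) with 2 in G2.
  replace (A1 - A2) with ((A1 + T) - (A2 + T)) by ring.
  eapply Rle_trans. apply Rabs_triang. rewrite Rabs_Ropp.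
  replace (18 * INR q / INR n) with (INR q * (6 / INR n) + 2 * INR q * (6 / INR n)) by (field; lra).
  lra.
Qed.

Lemma mult_period th M : cc th M = 1 -> ss th M = 0 ->
  forall i, cc th (i * M) = 1 /\ ss th (i * M) = 0.
Proof.
  intros H1 H2. destruct (period_facts th M H1 H2) as [Pc Ps].
  induction i as [|i [IH1 IH2]].
  - simpl. unfold cc, ss. change (INR 0) with 0. rewrite Rmult_0_l, cos_0, sin_0. auto.
  - rewrite Nat.mul_succ_l, Pc, Ps. auto.
Qed.

Theorem theorem29 (p q : nat) (hp : (0 < p)%nat) (hq : (0 < q)%nat)
  (hpq : Nat.gcd p q = 1%nat)
  (hw : Cexp (0, PI * INR p / INR q) <> RtoC 1) :
  let w := Cexp (0, PI * INR p / INR q) in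
  let S1 := sum_n_m (fun j => Cmult (pow_n w (j - 1)) (RtoC (E_jpq j p q))) 1 q in
  let S2 := sum_n_m (fun j => Cmult (pow_n w (j - 1))
              (RtoC (ln (Gamma (INR (j + 1) / INR (2 * q)) / Gamma (INR j / INR (2 * q))))))
              1 (2 * q) in
  is_series (gamma_term w) (Cminus S1 (Cdiv (Clog (Cminus 1 w)) w)) /\ S1 = S2.
Proof.
  intros w S1 S2.
  set (th := PI * INR p / INR q) in *.
  assert (Hqr : 0 < INR q) by (apply lt_0_INR; lia).
  assert (Hco : cos th < 1).
  { destruct (COS_bound th) as [_ Hc1]. destruct Hc1 as [Hc1|Hc1]; auto. exfalso. apply hw.
    pose proof (sin2_cos2 th) as H. rewrite Hc1 in H. unfold Rsqr in H.
    assert (H0 : sin th = 0) by nra.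
    unfold Cexp. simpl. rewrite exp_0, Hc1, H0. unfold RtoC. f_equal; ring. }
  assert (H2 : cc th (2 * q) = 1 /\ ss th (2 * q) = 0).
  { unfold cc, ss. replace (INR (2 * q) * th) with (0 + 2 * INR p * PI).
    rewrite cos_period, sin_period, cos_0, sin_0. auto.
    unfold th. rewrite mult_INR. change (INR 2) with 2. field. lra. }
  destruct H2 as [H2c H2s].
  destruct (period_facts th _ H2c H2s) as [P2c P2s].
  destruct (sum_zero_facts th _ Hco H2c H2s) as [Z2c Z2s].
  assert (FS2 : fst S2 = fsum (fun j => cc th j * Dg (2 * q) j) (2 * q)).
  { etransitivity.
    apply (weighted_fst th (fun j => ln (Gamma (INR (j + 1) / INR (2 * q)) / Gamma (INR j / INR (2 * q))))).
    apply fsum_ext. intros j _.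
    replace (S j + 1)%nat with (S (S j)) by lia. rewrite ln_Gdiv by (apply pos_frac; lia). reflexivity. }
  assert (SS2 : snd S2 = fsum (fun j => ss th j * Dg (2 * q) j) (2 * q)).
  { etransitivity.
    apply (weighted_snd th (fun j => ln (Gamma (INR (j + 1) / INR (2 * q)) / Gamma (INR j / INR (2 * q))))).
    apply fsum_ext. intros j _.
    replace (S j + 1)%nat with (S (S j)) by lia. rewrite ln_Gdiv by (apply pos_frac; lia). reflexivity. }
  assert (S1eq : S1 = S2).
  { destruct (Nat.Even_or_Odd p) as [[r Hr]|[r Hr]].
    - assert (Hev : Nat.even p = true) by (apply Nat.even_spec; exists r; auto).
      assert (H1 : cc th q = 1 /\ ss th q = 0).
      { unfold cc, ss. replace (INR q * th) with (0 + 2 * INR r * PI).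
        rewrite cos_period, sin_period, cos_0, sin_0. auto.
        unfold th. rewrite Hr, mult_INR. change (INR 2) with 2. field. lra. }
      destruct H1 as [H1c H1s].
      destruct (period_facts th _ H1c H1s) as [P1c P1s].
      destruct (sum_zero_facts th _ Hco H1c H1s) as [Z1c Z1s].
      assert (FS1 : fst S1 = fsum (fun j => cc th j * Dg q j) q).
      { etransitivity. apply (weighted_fst th (fun j => E_jpq j p q)).
        apply fsum_ext. intros j _. unfold E_jpq. rewrite Hev.
        replace (S j + 1)%nat with (S (S j)) by lia. rewrite ln_Gdiv by (apply pos_frac; lia). reflexivity. }
      assert (SS1 : snd S1 = fsum (fun j => ss th j * Dg q j) q).
      { etransitivity. apply (weighted_snd th (fun j => E_jpq j p q)).
        apply fsum_ext. intros j _. unfold E_jpq. rewrite Hev.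
        replace (S j + 1)%nat with (S (S j)) by lia. rewrite ln_Gdiv by (apply pos_frac; lia). reflexivity. }
      apply injective_projections.
      + rewrite FS1, FS2. apply even_case_eq; auto. apply cc_bound.
      + rewrite SS1, SS2. apply even_case_eq; auto. apply ss_bound.
    - assert (Hev : Nat.even p = false).
      { rewrite <- Nat.negb_odd. assert (Nat.odd p = true) by (apply Nat.odd_spec; exists r; auto).
        rewrite H. auto. }
      assert (H1 : cc th q = -1 /\ ss th q = 0).
      { unfold cc, ss. replace (INR q * th) with ((0 + 2 * INR r * PI) + PI).
        rewrite neg_cos, neg_sin, cos_period, sin_period, cos_0, sin_0. split; ring.
        unfold th. rewrite Hr, plus_INR, mult_INR. change (INR 2) with 2. change (INR 1) with 1. field. lra. }
      destruct H1 as [H1c H1s].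
      destruct (antiperiod_facts th _ H1c H1s) as [A1c A1s].
      assert (Ee : forall j, E_jpq (S j) p q = Dg (2 * q) j - Dg (2 * q) (j + q)).
      { intros j. unfold E_jpq. rewrite Hev.
        replace (S j + q + 1)%nat with (S (S (j + q))) by lia.
        replace (S j + q)%nat with (S (j + q)) by lia.
        replace (S j + 1)%nat with (S (S j)) by lia.
        rewrite ln_G4 by (apply pos_frac; lia). unfold Dg. ring. }
      assert (FS1 : fst S1 = fsum (fun j => cc th j * (Dg (2 * q) j - Dg (2 * q) (j + q))) q).
      { etransitivity. apply (weighted_fst th (fun j => E_jpq j p q)).
        apply fsum_ext. intros j _. rewrite Ee. reflexivity. }
      assert (SS1 : snd S1 = fsum (fun j => ss th j * (Dg (2 * q) j - Dg (2 * q) (j + q))) q).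
      { etransitivity. apply (weighted_snd th (fun j => E_jpq j p q)).
        apply fsum_ext. intros j _. rewrite Ee. reflexivity. }
      apply injective_projections.
      + rewrite FS1, FS2. apply odd_case_eq; auto.
      + rewrite SS1, SS2. apply odd_case_eq; auto. }
  split; [|exact S1eq].
  assert (HZ : Cdiv (Clog (Cminus 1 w)) w = (- ReG th 1, - ImG th 1)) by (apply Clog_div_w; auto).
  rewrite HZ.
  assert (HK0 : 0 <= K0 th).
  { unfold K0. pose proof (delta_pos th Hco). apply Rdiv_le_0_compat. lra. simpl. nra. }
  apply is_series_C.
  - intros eps He.
    assert (HL : forall n, Rabs (fsum (fun k => cc th k / INR (S k)) (S n * (2 * q)) - ReG th 1) <= K0 th / INR (S (S n * (2 * q)))).
    { intros n. destruct (mult_period th _ H2c H2s (S n)) as [M1 M2].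
      apply log_series_re; auto. }
    destruct (comp_bound (2 * q) (cc th) (fst S2) (ReG th 1) (K0 th) ltac:(lia) P2c Z2c (cc_bound th) HK0 HL FS2 eps He) as [K1 HK1].
    exists K1. intros K HK. specialize (HK1 K HK).
    rewrite fst_sum_n_C.
    rewrite (fsum_ext (fun k => fst (gamma_term w k)) (fun k => cc th k * (1 / INR (S k) - Lt k))).
    + replace (fst (Cminus S1 (- ReG th 1, - ImG th 1))) with (fst S2 + ReG th 1).
      exact HK1. rewrite S1eq. simpl. ring.
    + intros k _. unfold gamma_term. unfold w. rewrite pow_n_w. unfold Cmult, RtoC, Lt. simpl. ring.
  - intros eps He.
    assert (HL : forall n, Rabs (fsum (fun k => ss th k / INR (S k)) (S n * (2 * q)) - ImG th 1) <= K0 th / INR (S (S n * (2 * q)))).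
    { intros n. destruct (mult_period th _ H2c H2s (S n)) as [M1 M2].
      apply log_series_im; auto. }
    destruct (comp_bound (2 * q) (ss th) (snd S2) (ImG th 1) (K0 th) ltac:(lia) P2s Z2s (ss_bound th) HK0 HL SS2 eps He) as [K1 HK1].
    exists K1. intros K HK. specialize (HK1 K HK).
    rewrite snd_sum_n_C.
    rewrite (fsum_ext (fun k => snd (gamma_term w k)) (fun k => ss th k * (1 / INR (S k) - Lt k))).
    + replace (snd (Cminus S1 (- ReG th 1, - ImG th 1))) with (snd S2 + ImG th 1).
      exact HK1. rewrite S1eq. simpl. ring.
    + intros k _. unfold gamma_term. unfold w. rewrite pow_n_w. unfold Cmult, RtoC, Lt. simpl. ring.
Qed.
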